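(* Let $c>0$, let $\beta>0,\delta>0$, and let $G$ be a $c$-Ramsey graph on $n$ vertices together with a set $S\subseteq V(G)$, $|S|\ge n^{3/4}$, such that for all $A,B\subseteq S$ with $|A|,|B|\ge |S|^{1-\beta}$ we have $\delta\le d(A,B)\le 1-\delta$. Let $m=|S|$. Let $r\ge1$ and $X,Y_1,\dots,Y_r\subseteq S$ with $|X|\ge r\,m^{1-\beta}$ and $|Y_1|,\dots,|Y_r|\ge m^{1-\beta}$. Then there exists $v\in X$ such that $d(v,Y_i)\ge\delta$ for every $i=1,\dots,r$.
   Context: Logarithms base 2; $G$ is $c$-Ramsey if no set of $c\log n$ vertices is a clique or independent set. For $A,B\subseteq V(G)$, $d(A,B)=e(A,B)/(|A||B|)$ where $e(A,B)$ is the number of edges of $G$ with one endpoint in $A$ and the other in $B$; $d(v,B)$ means $d(\{v\},B)$. *)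

(* Defs.v *)
From HB Require Import structures.
From mathcomp Require Import all_boot all_order all_algebra.
From mathcomp Require Import reals exp.
Set Implicit Arguments. Unset Strict Implicit. Unset Printing Implicit Defensive.
Import Order.TTheory GRing.Theory Num.Theory.
Local Open Scope ring_scope.

Definition simple_graph (T : finType) (e : rel T) : Prop :=
  symmetric e /\ irreflexive e.

Definition is_clique (T : finType) (e : rel T) (A : {set T}) : bool :=
  [forall x in A, forall y in A, (x != y) ==> e x y].

Definition is_indep (T : finType) (e : rel T) (A : {set T}) : bool :=
  [forall x in A, forall y in A, ~~ e x y].

Definition log2 (R : realType) (x : R) : R := ln x / ln 2.

Definition c_Ramsey (R : realType) (c : R) (T : finType) (e : rel T) : Prop :=
  forall A : {set T}, c * log2 (#|T|%:R : R) <= #|A|%:R ->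
    ~~ is_clique e A && ~~ is_indep e A.

Definition eAB (T : finType) (e : rel T) (A B : {set T}) : nat :=
  #|[set p : T * T | (p.1 \in A) && (p.2 \in B) && e p.1 p.2]|.

Definition dens (R : realType) (T : finType) (e : rel T) (A B : {set T}) : R :=
  (eAB e A B)%:R / (#|A|%:R * #|B|%:R).

(* Main.v *)
Require Import Defs.
From HB Require Import structures.
From mathcomp Require Import all_boot all_order all_algebra.
From mathcomp Require Import reals exp.
Import Order.TTheory GRing.Theory Num.Theory.
Local Open Scope ring_scope.

Lemma eAB_sum (T : finType) (e : rel T) (A B : {set T}) :
  eAB e A B = (\sum_(a in A) \sum_(b in B) (e a b : nat))%N.
Proof.
rewrite /eAB -sum1_card.
rewrite big_mkcond /=.
rewrite [RHS]big_mkcond /=.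
rewrite (eq_bigr (fun a => \sum_(b : T) if (a \in A) && (b \in B) then (e a b : nat) else 0%N)).
2:{ move=> a _; rewrite big_mkcond; case: (a \in A) => //=. by rewrite big1. }
rewrite pair_big /=.
apply: eq_bigr => -[a b] _ /=; rewrite !inE /=.
case: (a \in A); case: (b \in B); case: (e a b) => //=.
Qed.

Lemma card_sum (T : finType) (X : {set T}) (P : pred T) :
  #|[set v in X | P v]| = (\sum_(v in X) (P v : nat))%N.
Proof.
rewrite -sum1_card big_mkcond /= [RHS]big_mkcond /=.
by apply: eq_bigr => v _; rewrite !inE; case: (v \in X); case: (P v).
Qed.

Lemma dens_lt (R : realType) (T : finType) (e : rel T) (A B : {set T}) (d : R) :
  0 < d -> (forall v, v \in A -> dens R e [set v] B < d) -> dens R e A B < d.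
Proof.
move=> d0 H.
have [A0|An] := eqVneq #|A| 0%N.
  by rewrite /dens A0 mul0r invr0 mulr0.
have [B0|Bn] := eqVneq #|B| 0%N.
  by rewrite /dens B0 mulr0 invr0 mulr0.
have Bp : (0 : R) < #|B|%:R by rewrite ltr0n lt0n.
have Ap : (0 : R) < #|A|%:R by rewrite ltr0n lt0n.
rewrite /dens ltr_pdivrMr ?mulr_gt0 //.
rewrite eAB_sum natr_sum.
have -> : d * (#|A|%:R * #|B|%:R) = \sum_(a in A) (d * #|B|%:R) :> R.
  by rewrite sumr_const -[RHS]mulr_natr mulrA mulrAC.
apply: ltr_sum.
  by move: An; rewrite -lt0n card_gt0 => /set0Pn [x xA]; apply/hasP; exists x; rewrite ?mem_index_enum.
move=> a aA; have := H a aA.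
by rewrite /dens eAB_sum big_set1 cards1 mul1r ltr_pdivrMr // natr_sum.
Qed.

Theorem mainTheorem7 (R : realType) (c beta delta : R)
  (T : finType) (e : rel T) (S : {set T}) (r : nat)
  (X : {set T}) (Y : 'I_r -> {set T}) :
  0 < c -> 0 < beta -> 0 < delta ->
  simple_graph e ->
  c_Ramsey c e ->
  (#|T|%:R : R) `^ (3 / 4) <= #|S|%:R ->
  (forall A B : {set T}, A \subset S -> B \subset S ->
     (#|S|%:R : R) `^ (1 - beta) <= #|A|%:R ->
     (#|S|%:R : R) `^ (1 - beta) <= #|B|%:R ->
     delta <= dens R e A B <= 1 - delta) ->
  (1 <= r)%N ->
  X \subset S -> (forall i, Y i \subset S) ->
  r%:R * (#|S|%:R : R) `^ (1 - beta) <= #|X|%:R ->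
  (forall i, (#|S|%:R : R) `^ (1 - beta) <= #|Y i|%:R) ->
  exists2 v, v \in X & forall i, delta <= dens R e [set v] (Y i).
Proof.
move=> c0 b0 d0 _ _ _ Hden r1 XS YS HX HY.
set p := (#|S|%:R : R) `^ (1 - beta) in Hden HX HY.
case: (boolP [exists v in X, [forall i, delta <= dens R e [set v] (Y i)]]).
  by move=> /exists_inP [v vX /forallP H]; exists v.
move=> /exists_inPn Hno; exfalso.
pose bad v i := dens R e [set v] (Y i) < delta.
have Hbad : forall v, v \in X -> exists i, bad v i.
  move=> v vX; have /forallPn [i Hi] := Hno v vX.
  by exists i; rewrite /bad ltNge.
pose Ai i := [set v in X | bad v i].
have cover : (#|X| <= \sum_(i < r) #|Ai i|)%N.
  rewrite (eq_bigr (fun i => \sum_(v in X) (bad v i : nat))%N); last first.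
    by move=> i _; rewrite card_sum.
  rewrite exchange_big /= -sum1_card leq_sum // => v vX.
  have [i Hi] := Hbad v vX.
  by rewrite (bigD1 i) //= Hi.
case: (boolP [exists i, p <= #|Ai i|%:R]); last first.
  move=> /existsPn Hs.
  have : (\sum_(i < r) (#|Ai i|%:R : R)) < \sum_(i < r) p.
    apply: ltr_sum.
      by apply/hasP; exists (Ordinal r1); rewrite ?mem_index_enum.
    by move=> i _; rewrite ltNge Hs.
  rewrite sumr_const card_ord -mulr_natl -natr_sum => Hlt.
  have := le_lt_trans (le_trans HX _) Hlt.
  by rewrite ler_nat cover ltxx => /(_ isT).
move=> /existsP [i Hi].
have AS : Ai i \subset S.
  by apply: subset_trans XS; apply/subsetP => v; rewrite inE => /andP [].
have /andP [Hl _] := Hden (Ai i) (Y i) AS (YS i) Hi (HY i).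
have : dens R e (Ai i) (Y i) < delta.
  by apply: dens_lt => // v; rewrite inE => /andP [].
by move=> Hlt; have := lt_le_trans Hlt Hl; rewrite ltxx.
Qed.
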